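(* Let $\gamma_i\in\mathcal{M}_k\otimes\mathcal{M}_k$, $i=1,\dots,n$, be states whose images are not contained in the anti-symmetric subspace of $\mathbb{C}^k\otimes\mathbb{C}^k$. Then: (a) $\gamma_1^\Gamma\otimes\cdots\otimes\gamma_n^\Gamma\ge0$ if and only if $\gamma_i^\Gamma\ge0$ for all $i$; (b) $\mathcal{R}(\gamma_1^\Gamma)\otimes\cdots\otimes\mathcal{R}(\gamma_n^\Gamma)\ge0$ if and only if $\mathcal{R}(\gamma_i^\Gamma)\ge0$ for all $i$; (c) $\mathcal{R}(\gamma_1)\otimes\cdots\otimes\mathcal{R}(\gamma_n)=\gamma_1\otimes\cdots\otimes\gamma_n$ if and only if $\mathcal{R}(\gamma_i)=\gamma_i$ for all $i$.
   Context: $\mathcal{M}_k$ denotes complex $k\times k$ matrices; $\mathcal{M}_k\otimes\mathcal{M}_k\cong\mathcal{M}_{k^2}$ via the Kronecker product. A state is a positive semidefinite Hermitian matrix (not necessarily of trace one). The anti-symmetric subspace of $\mathbb{C}^k\otimes\mathbb{C}^k$ is $\{x: F_kx=-x\}$, where $F_k(v\otimes w)=w\otimes v$ is the flip operator. Partial transpose: $(\sum_iA_i\otimes B_i)^\Gamma=\sum_iA_i\otimes B_i^t$. Realignment on $\mathcal{M}_k\otimes\mathcal{M}_k$: identify $\mathcal{M}_k$ with $\mathbb{C}^k\otimes\mathbb{C}^k$ via $\mathrm{vec}(vw^t)=v\otimes w$ (extended linearly), and set $\mathcal{R}(A\otimes B)=\mathrm{vec}(A)\mathrm{vec}(B)^t$,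 extended linearly. *)

(* Defs.v *)
From HB Require Import structures.
From mathcomp Require Import all_boot all_order all_algebra.
Set Implicit Arguments. Unset Strict Implicit. Unset Printing Implicit Defensive.
Import Order.TTheory GRing.Theory Num.Theory Num.Def.
Local Open Scope ring_scope.

Section QInfo.
Context {C : numClosedFieldType}.

(* Splitting an index of 'I_(m*n) into a pair; inverse of mxvec_index. *)
Definition idx_split m n (p : 'I_(m * n)) : 'I_m * 'I_n :=
  enum_val (cast_ord (esym (mxvec_cast m n)) p).

(* Kronecker product, with C^m (x) C^n identified with C^(m*n) via mxvec_index *)
Definition kron m1 n1 m2 n2 (A : 'M[C]_(m1, n1)) (B : 'M[C]_(m2, n2))
  : 'M[C]_(m1 * m2, n1 * n2) :=
  \matrix_(p, q) (A (idx_split p).1 (idx_split q).1 * B (idx_split p).2 (idx_split q).2).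

Fixpoint kronn d (n : nat) (g : nat -> 'M[C]_d) : 'M[C]_(d ^ n) :=
  match n return 'M[C]_(d ^ n) with
  | 0 => 1%:M
  | n'.+1 => castmx (esym (expnS d n'), esym (expnS d n'))
               (kron (g 0%N) (kronn n' (fun i => g i.+1)))
  end.

Definition adjmx m n (A : 'M[C]_(m, n)) : 'M[C]_(n, m) := (map_mx conjC A)^T.

(* state = positive semidefinite Hermitian matrix (trace not normalized) *)
Definition psd n (A : 'M[C]_n) : Prop :=
  adjmx A = A /\ forall x : 'cV[C]_n, 0 <= (adjmx x *m A *m x) 0 0.

(* partial transpose on the second factor of M_k (x) M_k *)
Definition ptrans k (X : 'M[C]_(k * k)) : 'M[C]_(k * k) :=
  \matrix_(p, q) X (mxvec_index (idx_split p).1 (idx_split q).2)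
                   (mxvec_index (idx_split q).1 (idx_split p).2).

(* realignment: R(A (x) B) = vec(A) vec(B)^t, vec(v w^t) = v (x) w *)
Definition realign k (X : 'M[C]_(k * k)) : 'M[C]_(k * k) :=
  \matrix_(p, q) X (mxvec_index (idx_split p).1 (idx_split q).1)
                   (mxvec_index (idx_split p).2 (idx_split q).2).

Definition flip k (x : 'cV[C]_(k * k)) : 'cV[C]_(k * k) :=
  \col_p x (mxvec_index (idx_split p).2 (idx_split p).1) 0.

Definition antisym k (x : 'cV[C]_(k * k)) : Prop := flip x = - x.

Definition range_in_antisym k (X : 'M[C]_(k * k)) : Prop :=
  forall x : 'cV[C]_(k * k), antisym (X *m x).

End QInfo.

(* Main.v *)
Require Import Defs.
From HB Require Import structures.
From mathcomp Require Import all_boot all_order all_algebra.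
Set Implicit Arguments. Unset Strict Implicit. Unset Printing Implicit Defensive.
From mathcomp Require Import ring.
Import Order.TTheory GRing.Theory Num.Theory Num.Def.
Local Open Scope ring_scope.

Section P.
Context {C : numClosedFieldType}.

Lemma idx_splitK m n (a : 'I_m) (b : 'I_n) : idx_split (mxvec_index a b) = (a, b).
Proof. by rewrite /idx_split /mxvec_index cast_ordK enum_rankK. Qed.

Lemma sum_idx m n (F : 'I_(m*n) -> C) :
  \sum_p F p = \sum_a \sum_b F (mxvec_index a b).
Proof.
rewrite pair_bigA /=.
rewrite (reindex (uncurry (@mxvec_index m n))) /=; last exact: curry_mxvec_bij.
by apply: eq_bigr => -[a b].
Qed.

Lemma kronE m1 n1 m2 n2 (A : 'M[C]_(m1,n1)) (B : 'M[C]_(m2,n2)) a b c d :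
  kron A B (mxvec_index a b) (mxvec_index c d) = A a c * B b d.
Proof. by rewrite mxE !idx_splitK. Qed.

Lemma kron_mul m1 n1 p1 m2 n2 p2 (A : 'M[C]_(m1,n1)) (B : 'M[C]_(m2,n2))
  (A' : 'M[C]_(n1,p1)) (B' : 'M[C]_(n2,p2)) :
  kron A B *m kron A' B' = kron (A *m A') (B *m B').
Proof.
apply/matrixP => p q; case/mxvec_indexP: p => a b; case/mxvec_indexP: q => c d.
rewrite kronE !mxE sum_idx big_distrl /=; apply: eq_bigr => i _.
rewrite big_distrr /=; apply: eq_bigr => j _.
by rewrite !kronE mulrACA.
Qed.

Lemma adjmx_kron m1 n1 m2 n2 (A : 'M[C]_(m1,n1)) (B : 'M[C]_(m2,n2)) :
  adjmx (kron A B) = kron (adjmx A) (adjmx B).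
Proof.
apply/matrixP => p q; case/mxvec_indexP: p => a b; case/mxvec_indexP: q => c d.
by rewrite kronE !mxE !idx_splitK rmorphM.
Qed.

Definition fr m n (W A : 'M[C]_(m,n)) := \sum_p \sum_q W p q * A p q.

Lemma fr_kron m1 n1 m2 n2 (W A : 'M[C]_(m1,n1)) (V B : 'M[C]_(m2,n2)) :
  fr (kron W V) (kron A B) = fr W A * fr V B.
Proof.
rewrite /fr sum_idx big_distrl /=; apply: eq_bigr => a _.
rewrite big_distrl /=.
under eq_bigr do rewrite sum_idx.
rewrite exchange_big /=; apply: eq_bigr => c _.
rewrite big_distrr /=; apply: eq_bigr => b _.
rewrite big_distrr /=; apply: eq_bigr => d _.
by rewrite !kronE mulrACA.
Qed.

Lemma fr_cast m m' (e : m = m') (W A : 'M[C]_m) :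
  fr (castmx (e,e) W) (castmx (e,e) A) = fr W A.
Proof. by case: m' / e; rewrite !castmx_id. Qed.

Lemma fr_kronn d n (W A : nat -> 'M[C]_d) :
  fr (kronn n W) (kronn n A) = \prod_(i < n) fr (W i) (A i).
Proof.
elim: n W A => [|n IH] W A /=.
  rewrite big_ord0 /fr.
  under eq_bigr do under eq_bigr do rewrite !mxE.
  have E (i j : 'I_(d ^ 0)) : i = j.
    by apply/val_inj; case: i j => [[|i] Hi] [[|j] Hj] //; rewrite expn0 in Hi Hj.
  rewrite (eq_bigr (fun _ => 1)) ?sumr_const ?card_ord ?expn0 // => i _.
  rewrite (bigD1 i) //= eqxx mulr1 big1 ?addr0 // => j; rewrite eq_sym => /negbTE ->.
  by rewrite mulr0.
by rewrite fr_cast fr_kron IH big_ord_recl.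
Qed.


Definition qf n (A : 'M[C]_n) (x : 'cV[C]_n) := (adjmx x *m A *m x) 0 0.
Definition Wv n (x : 'cV[C]_n) : 'M[C]_n := \matrix_(i, j) ((x i 0)^* * x j 0).

Lemma qf_fr n (A : 'M[C]_n) x : qf A x = fr (Wv x) A.
Proof.
rewrite /qf /fr mxE exchange_big /=; apply: eq_bigr => j _.
rewrite mxE big_distrl /=; apply: eq_bigr => i _.
by rewrite !mxE mulrAC.
Qed.

Definition kv m n (x : 'cV[C]_m) (y : 'cV[C]_n) : 'cV[C]_(m * n) :=
  \col_p (x (idx_split p).1 0 * y (idx_split p).2 0).

Lemma Wv_kron m n (x : 'cV[C]_m) (y : 'cV[C]_n) :
  kron (Wv x) (Wv y) = Wv (kv x y).
Proof.
apply/matrixP => p q; case/mxvec_indexP: p => a b; case/mxvec_indexP: q => c d.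
by rewrite kronE !mxE !idx_splitK rmorphM mulrACA.
Qed.

Lemma Wv_cast m m' (e : m = m') (x : 'cV[C]_m) :
  castmx (e, e) (Wv x) = Wv (castmx (e, erefl 1%N) x).
Proof. by case: m' / e; rewrite !castmx_id. Qed.

Lemma kronn_Wv d n (x : nat -> 'cV[C]_d) :
  exists X, kronn n (fun i => Wv (x i)) = Wv X.
Proof.
elim: n x => [|n IH] x /=.
  exists (\col_i 1); apply/matrixP => i j.
  have -> : i = j.
    by apply/val_inj; case: i j => [[|i] Hi] [[|j] Hj] //; rewrite expn0 in Hi Hj.
  by rewrite !mxE eqxx conjC1 mulr1.
have [X ->] := IH (fun i => x i.+1).
by rewrite Wv_kron Wv_cast; eexists.
Qed.

Lemma kronn_psd_prod d n (B : nat -> 'M[C]_d) (x : nat -> 'cV[C]_d) :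
  psd (kronn n B) -> 0 <= \prod_(i < n) qf (B i) (x i).
Proof.
case=> _ H; have [X EX] := kronn_Wv n x.
have : 0 <= qf (kronn n B) X := H X.
rewrite qf_fr -EX fr_kronn.
by under eq_bigr do rewrite -qf_fr.
Qed.

Definition ev n (p : 'I_n) : 'cV[C]_n := delta_mx p 0.

Lemma adjmxD m n (x y : 'M[C]_(m,n)) : adjmx (x + y) = adjmx x + adjmx y.
Proof. by rewrite /adjmx map_mxD linearD. Qed.

Lemma adjmxZ m n c (x : 'M[C]_(m,n)) : adjmx (c *: x) = c^* *: adjmx x.
Proof. by rewrite /adjmx map_mxZ linearZ. Qed.

Lemma adjmx_ev n (p : 'I_n) : adjmx (ev p) = delta_mx 0 p.
Proof. by rewrite /adjmx /ev map_delta_mx trmx_delta. Qed.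

Lemma bf_ev n (A : 'M[C]_n) p q : adjmx (ev p) *m A *m ev q = (A p q)%:M.
Proof.
rewrite adjmx_ev /ev -rowE -colE; apply/matrixP => i j.
by rewrite !ord1 !mxE eqxx mulr1n.
Qed.

Lemma qf_two n (A : 'M[C]_n) p q c :
  qf A (ev p + c *: ev q) = A p p + c * A p q + c^* * A q p + c^* * c * A q q.
Proof.
rewrite /qf adjmxD adjmxZ !mulmxDl !mulmxDr -!scalemxAl -!scalemxAr !bf_ev.
rewrite !mxE !eqxx !mulr1n; ring.
Qed.

Lemma qf_ev n (A : 'M[C]_n) p : qf A (ev p) = A p p.
Proof. by rewrite -(addr0 (ev p)) -(scale0r (ev p)) qf_two conjC0; ring. Qed.

Lemma qf_psd n (A : 'M[C]_n) : (forall x, 0 <= qf A x) -> psd A.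
Proof.
move=> H; split => //; apply/matrixP => i j; rewrite !mxE.
have Hd p : (A p p)^* = A p p by rewrite geC0_conj // -qf_ev.
have E1 := geC0_conj (H (ev i + 1 *: ev j)).
have E2 := geC0_conj (H (ev i + 'i *: ev j)).
rewrite qf_two in E1; rewrite qf_two in E2.
rewrite !rmorphD !rmorphM /= !conjCK conjC1 conjCi !Hd in E1 E2.
set a := A i j in E1 E2 *; set b := A j i in E1 E2 *.
have key : (b^* - a) * 2 = 0.
  move/eqP: E1; rewrite -subr_eq0 => /eqP E1.
  move/eqP: E2; rewrite -subr_eq0 => /eqP E2.
  have -> : (b^* - a) * 2 = 
   (A i i + 1 * a^* + 1 * b^* + 1 * 1 * A j j - (A i i + 1 * a + 1 * b + 1 * 1 * A j j))
   - 'i * (A i i + - 'i * a^* + 'i * b^* + 'i * - 'i * A j j -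
      (A i i + 'i * a + - 'i * b + - 'i * 'i * A j j))
   - (1 + 'i ^+ 2) * (a^* - b^* + a - b) by ring.
  by rewrite E1 E2 sqrCi addrN !mul0r mulr0 !subr0.
move/eqP: key; rewrite mulf_eq0 pnatr_eq0 orbF subr_eq0 => /eqP.
done.
Qed.

Lemma kronn_psd_factor d n (B : nat -> 'M[C]_d) (y : nat -> 'cV[C]_d) :
  (forall i, (i < n)%N -> 0 < qf (B i) (y i)) ->
  psd (kronn n B) -> forall i, (i < n)%N -> psd (B i).
Proof.
move=> Hy Hk i0 hi0; apply: qf_psd => x.
pose z j := if j == i0 then x else y j.
have := kronn_psd_prod z Hk.
rewrite (bigD1 (Ordinal hi0)) //= /z eqxx pmulr_lge0 //.
apply: prodr_gt0 => j hj; rewrite -(inj_eq val_inj) /= in hj.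
by rewrite (negbTE hj) Hy.
Qed.

Lemma adjmx_mul m n p (A : 'M[C]_(m,n)) (B : 'M[C]_(n,p)) :
  adjmx (A *m B) = adjmx B *m adjmx A.
Proof. by rewrite /adjmx map_mxM trmx_mul. Qed.

Lemma adjmxK m n (A : 'M[C]_(m,n)) : adjmx (adjmx A) = A.
Proof. by apply/matrixP => i j; rewrite !mxE conjCK. Qed.

Lemma adjmx1 n : adjmx (1%:M : 'M[C]_n) = 1%:M.
Proof. by rewrite /adjmx map_mx1 trmx1. Qed.

Lemma psd_gram n (A : 'M[C]_n) : psd A -> exists L : 'M[C]_n, A = adjmx L *m L.
Proof.
case=> Ah Hq.
have Aadj : map_mx conjC (A^T) = A by rewrite -map_trmx; exact: Ah.
have An : A \is normalmx by apply/normalmxP; rewrite Aadj.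
have /orthomx_spectralP E := An.
set P := spectralmx A in E; set sp := spectral_diag A in E.
have Pu : P \is unitarymx := spectral_unitarymx A.
have adjE : adjmx P = map_mx conjC (P^T) by rewrite /adjmx map_trmx.
have PPt : P *m adjmx P = 1%:M by rewrite adjE; apply/unitarymxP.
have iP : invmx P = adjmx P by rewrite invmx_unitary // adjE.
rewrite iP in E.
have sp0 i : 0 <= sp 0 i.
  have := Hq (adjmx P *m ev i).
  rewrite adjmx_mul adjmxK E !mulmxA -(mulmxA _ P (adjmx P)) PPt mulmx1 -(mulmxA _ P (adjmx P)) PPt mulmx1 bf_ev !mxE eqxx.
  by rewrite mulr1n.
exists (diag_mx (\row_j sqrtC (sp 0 j)) *m P).
have Dadj : adjmx (diag_mx (\row_j sqrtC (sp 0 j))) = diag_mx (\row_j sqrtC (sp 0 j)).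
  apply/matrixP => i j; rewrite !mxE rmorphMn.
  case: (eqVneq i j) => [->|ne]; last by rewrite !mulr0n.
  by rewrite !mulr1n; apply: geC0_conj; rewrite sqrtC_ge0.
rewrite adjmx_mul Dadj mulmxA -(mulmxA (adjmx P)) mulmx_diag.
rewrite {1}E; congr (_ *m diag_mx _ *m _); apply/rowP => j.
by rewrite !mxE -expr2 sqrtCK.
Qed.

Lemma gram_psd n (L : 'M[C]_n) : psd (adjmx L *m L).
Proof.
split; first by rewrite adjmx_mul adjmxK.
move=> x; rewrite !mulmxA -adjmx_mul -mulmxA.
rewrite mxE; apply: sumr_ge0 => i _; rewrite !mxE mulrC mul_conjC_ge0 //.
Qed.

Lemma castmx_gram m m' (e : m = m') (L : 'M[C]_m) :
  castmx (e,e) (adjmx L *m L) = adjmx (castmx (e,e) L) *m castmx (e,e) L.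
Proof. by case: m' / e; rewrite !castmx_id. Qed.

Lemma kronn_gram d n (B : nat -> 'M[C]_d) :
  (forall i, (i < n)%N -> exists L : 'M[C]_d, B i = adjmx L *m L) ->
  exists Z : 'M[C]_(d ^ n), kronn n B = adjmx Z *m Z.
Proof.
elim: n B => [|n IH] B H /=.
  by exists 1%:M; rewrite adjmx1 mulmx1.
have [L0 E0] := H 0%N isT.
have [Z EZ] := IH (fun i => B i.+1) (fun i hi => H i.+1 hi).
by rewrite EZ E0 -kron_mul -adjmx_kron castmx_gram; eexists.
Qed.

Lemma kronn_psd_iff d n (B : nat -> 'M[C]_d) (y : nat -> 'cV[C]_d) :
  (forall i, (i < n)%N -> 0 < qf (B i) (y i)) ->
  psd (kronn n B) <-> (forall i, (i < n)%N -> psd (B i)).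
Proof.
move=> Hy; split; first exact: kronn_psd_factor Hy.
move=> H; have [Z ->] := kronn_gram (fun i hi => psd_gram (H i hi)).
exact: gram_psd.
Qed.

Lemma ptransE k (X : 'M[C]_(k * k)) a b c d :
  ptrans X (mxvec_index a b) (mxvec_index c d) = X (mxvec_index a d) (mxvec_index c b).
Proof. by rewrite mxE !idx_splitK. Qed.

Lemma realignE k (X : 'M[C]_(k * k)) a b c d :
  realign X (mxvec_index a b) (mxvec_index c d) = X (mxvec_index a c) (mxvec_index b d).
Proof. by rewrite mxE !idx_splitK. Qed.

Lemma nonzero_of k (X : 'M[C]_(k * k)) : ~ range_in_antisym X -> X <> 0.
Proof.
move=> H E; apply: H => x; rewrite E mul0mx /antisym oppr0.
by apply/colP => p; rewrite !mxE.
Qed.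

Lemma psd_diag n (A : 'M[C]_n) p : psd A -> 0 <= A p p.
Proof. by case=> _ H; rewrite -qf_ev; exact: H. Qed.

Lemma psd_herm n (A : 'M[C]_n) p q : psd A -> A q p = (A p q)^*.
Proof. by case=> Ah _; rewrite -{1}Ah !mxE. Qed.

Lemma psd_diag0 n (A : 'M[C]_n) : psd A -> (forall p, A p p = 0) -> A = 0.
Proof.
move=> Hp H0; apply/matrixP => p q; rewrite mxE.
case: (Hp) => _ Hq.
have : 0 <= qf A (ev p + (- (A p q)^*) *: ev q) := Hq _.
rewrite qf_two !H0 (psd_herm p q Hp) !raddfN /= !conjCK.
set a := A p q.
have -> : 0 + - a^* * a + - a * a^* + - a * - a^* * 0 = - (a * a^*) *+ 2.
  by rewrite mulr2n; ring.
rewrite pmulrn_lge0 // oppr_ge0 => Hle.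
have : a * a^* == 0 by rewrite eq_le Hle mul_conjC_ge0.
by rewrite mul_conjC_eq0 => /eqP.
Qed.

Lemma pos_diag n (A : 'M[C]_n) : psd A -> A <> 0 -> exists p, 0 < A p p.
Proof.
move=> Hp Hn; case: (pickP (fun p => 0 < A p p)) => [p Hpp|H]; first by exists p.
exfalso; apply: Hn; apply: psd_diag0 => // p.
by have := H p; rewrite lt_def (psd_diag p Hp) andbT => /negbFE /eqP.
Qed.

Lemma eq_kronn d n (g g' : nat -> 'M[C]_d) :
  (forall i, (i < n)%N -> g i = g' i) -> kronn n g = kronn n g'.
Proof.
elim: n g g' => [|n IH] g g' H //=.
by rewrite (H 0%N isT) (IH (fun i => g i.+1) (fun i => g' i.+1)) // => i hi; apply: H.
Qed.

Lemma frD m n (W1 W2 A : 'M[C]_(m,n)) : fr (W1 + W2) A = fr W1 A + fr W2 A.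
Proof.
rewrite /fr -big_split /=; apply: eq_bigr => p _.
rewrite -big_split /=; apply: eq_bigr => q _; by rewrite mxE mulrDl.
Qed.

Lemma sum_delta (I : finType) (p : I) (F : I -> C) :
  \sum_i (p == i)%:R * F i = F p.
Proof.
rewrite (bigD1 p) //= eqxx mul1r big1 ?addr0 // => i hi.
by rewrite eq_sym (negbTE hi) mul0r.
Qed.

Lemma fr1 n (A : 'M[C]_n) : fr 1%:M A = \sum_p A p p.
Proof.
apply: eq_bigr => p _; under eq_bigr do rewrite mxE.
by rewrite sum_delta.
Qed.

Lemma fr_delta m n (A : 'M[C]_(m,n)) p q : fr (delta_mx p q) A = A p q.
Proof.
rewrite /fr (bigD1 p) //= [X in _ + X]big1 ?addr0; last first.
  move=> i hi; apply: big1 => j _; rewrite mxE (negbTE hi) mul0r //.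
under eq_bigr do rewrite mxE eqxx /=.
under eq_bigr do rewrite eq_sym.
by rewrite sum_delta.
Qed.

Definition xJ k : 'cV[C]_(k * k) := \col_p ((idx_split p).1 == (idx_split p).2)%:R.

Lemma frJ k (A : 'M[C]_(k * k)) :
  fr (Wv (xJ k)) A = \sum_a \sum_c A (mxvec_index a a) (mxvec_index c c).
Proof.
rewrite /fr sum_idx; apply: eq_bigr => a _.
rewrite (bigD1 a) //= [X in _ + X]big1 ?addr0; last first.
  move=> b hb; apply: big1 => q _; rewrite !mxE idx_splitK /= eq_sym (negbTE hb).
  by rewrite rmorph0 !mul0r.
rewrite sum_idx; apply: eq_bigr => c _.
under eq_bigr do rewrite !mxE !idx_splitK /= eqxx rmorph1 mul1r.
by rewrite sum_delta.
Qed.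

Definition WJ k : 'M[C]_(k * k) := 1%:M + Wv (xJ k).

Lemma fr_realign k (A : 'M[C]_(k * k)) : fr (WJ k) (realign A) = fr (WJ k) A.
Proof.
rewrite /WJ !frD !frJ !fr1 addrC; congr (_ + _).
  rewrite sum_idx; apply: eq_bigr => a _; apply: eq_bigr => c _.
  by rewrite realignE.
rewrite sum_idx; apply: eq_bigr => a _; apply: eq_bigr => c _.
by rewrite realignE.
Qed.

Lemma fr_WJ_pos k (A : 'M[C]_(k * k)) : psd A -> A <> 0 -> 0 < fr (WJ k) A.
Proof.
move=> Hp Hn; have [p Hpp] := pos_diag Hp Hn.
rewrite /WJ frD fr1 -qf_fr; apply: ltr_wpDr; first by case: Hp => _; apply.
rewrite (bigD1 p) //=; apply: ltr_wpDr => //.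
by apply: sumr_ge0 => q _; apply: psd_diag.
Qed.
End P.

Unset Implicit Arguments.

Theorem mainTheorem15 (C : numClosedFieldType) (k n : nat)
    (gamma : nat -> 'M[C]_(k * k)) :
  (forall i, (i < n)%N -> psd (gamma i) /\ ~ range_in_antisym (gamma i)) ->
  [/\ (psd (kronn n (fun i => ptrans (gamma i))) <->
         (forall i, (i < n)%N -> psd (ptrans (gamma i)))),
      (psd (kronn n (fun i => realign (ptrans (gamma i)))) <->
         (forall i, (i < n)%N -> psd (realign (ptrans (gamma i)))))
    & (kronn n (fun i => realign (gamma i)) = kronn n gamma <->
         (forall i, (i < n)%N -> realign (gamma i) = gamma i))].
Proof.
move=> H.
have Hp i : (i < n)%N -> psd (gamma i) by move=> hi; case: (H i hi).
have Hn i : (i < n)%N -> gamma i <> 0 by move=> hi; case: (H i hi) => _ /nonzero_of.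
split.
- pose y i : 'cV[C]_(k * k) :=
    if [pick p | 0 < gamma i p p] is Some p then ev p else 0.
  apply: (kronn_psd_iff (B := fun i => ptrans (gamma i)) (y := y)) => i hi.
  rewrite /y; case: pickP => [p Hpp|H0]; last first.
    have [p Hpp] := pos_diag (Hp i hi) (Hn i hi).
    by move: (H0 p); rewrite /= Hpp.
  rewrite qf_ev; move: Hpp; case/mxvec_indexP: p => a b.
  by rewrite ptransE.
- pose y i : 'cV[C]_(k * k) :=
    if [pick p | 0 < gamma i p p] is Some p then
      ev (mxvec_index (idx_split p).1 (idx_split p).1) +
      1 *: ev (mxvec_index (idx_split p).2 (idx_split p).2) else 0.
  apply: (kronn_psd_iff (B := fun i => realign (ptrans (gamma i))) (y := y)) => i hi.
  rewrite /y; case: pickP => [p Hpp|H0]; last first.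
    have [p Hpp] := pos_diag (Hp i hi) (Hn i hi).
    by move: (H0 p); rewrite /= Hpp.
  rewrite qf_two; move: Hpp; case/mxvec_indexP: p => a b Hpp.
  rewrite idx_splitK /= !realignE !ptransE conjC1 !mul1r.
  have Hd := fun p => psd_diag p (Hp i hi).
  apply: (ltr_wpDr (Hd _)); apply: (ltr_wpDr (Hd _)); exact: (ltr_pwDr Hpp (Hd _)).
- split; last by move=> E; apply: eq_kronn.
  move=> E i0 hi0; apply/matrixP => p q.
  pose W j : 'M[C]_(k * k) := if j == i0 then delta_mx p q else WJ k.
  have W0 : W i0 = delta_mx p q by rewrite /W eqxx.
  have W1 (j : 'I_n) : j != Ordinal hi0 -> W j = WJ k.
    by rewrite -(inj_eq val_inj) /= => hj; rewrite /W (negbTE hj).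
  have := congr1 (fr (kronn n W)) E; rewrite !fr_kronn.
  rewrite (bigD1 (Ordinal hi0) isT) (bigD1 (Ordinal hi0) isT).
  rewrite W0 !fr_delta.
  have EP : \prod_(j < n | true && (j != Ordinal hi0)) fr (W j) (realign (gamma j))
          = \prod_(j < n | true && (j != Ordinal hi0)) fr (W j) (gamma j).
    by apply: eq_bigr => j hj; rewrite W1 // fr_realign.
  have P0 : \prod_(j < n | true && (j != Ordinal hi0)) fr (W j) (gamma j) != 0.
    apply/lt0r_neq0/prodr_gt0 => j hj; rewrite W1 //.
    by apply: fr_WJ_pos; [apply: Hp | apply: Hn].
  rewrite EP => Heq; exact: (mulIf P0 Heq).
Qed.
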